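(* Let $C>0$ be a constant such that for every sufficiently large positive integer $q$ there exists a subset $S\subseteq\mathbb{Z}/q\mathbb{Z}$ with $|S|>q/\exp(C\sqrt{\log q})$ containing no three-term arithmetic progression modulo $q$ (no $a,b,c\in S$ with $a\not\equiv b$ and $a+b\equiv 2c\pmod q$). Then for every sequence $x_1,x_2,x_3,\dots$ of numbers in $(0,1]$ converging to $0$, there are infinitely many positive integers $n$ such that $$\frac{r(x_{n+1})}{r(x_n)}\ <\ \exp\left(-\frac{1}{2C^2}\left(\log^2 x_{n+1}-\log^2 x_n\right)\right).$$
   Context: For a positive integer $n$ and $T\subseteq \mathbb{Z}/n\mathbb{Z}$, $\mu_n(T)=\#\{(a,b,c)\in T^3 : a+b\equiv 2c \pmod n\}/n^2$ (ordered triples, trivial ones included). For $0<\rho\le1$, $r_q(\rho)=\min\{\mu_q(S): S\subseteq \mathbb{Z}/q\mathbb{Z},\ |S|\ge\rho q\}$, and $r(\rho)=\liminf_{q\to\infty,\ q\text{ prime}} r_q(\rho)$. *)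

(* Defs.v *)
From HB Require Import structures.
From mathcomp Require Import all_boot all_order all_algebra.
From mathcomp Require Import all_classical all_reals all_analysis.
Set Implicit Arguments. Unset Strict Implicit. Unset Printing Implicit Defensive.
Import Order.TTheory GRing.Theory Num.Theory.
Local Open Scope ring_scope.
Local Open Scope classical_set_scope.

(* Z/nZ is modelled by 'I_n (residues 0..n-1), with congruences taken mod n. *)

Definition ap3 (n : nat) (a b c : 'I_n) : bool :=
  ((a + b) %% n == (2 * c) %% n)%N.

Definition mu3 {R : realType} (n : nat) (T : {set 'I_n}) : R :=
  (#|[set t : 'I_n * 'I_n * 'I_n |
        [&& t.1.1 \in T, t.1.2 \in T, t.2 \in T & ap3 t.1.1 t.1.2 t.2]]|)%:R
  / ((n ^ 2)%N)%:R.
Arguments mu3 {R} n T.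

(* r_q(rho) = min { mu_q(S) : S subset of Z/qZ, |S| >= rho q }.
   The min is taken starting from mu_q(Z/qZ), which is itself a candidate
   whenever rho <= 1 (the only range used). *)
Definition rq {R : realType} (q : nat) (rho : R) : R :=
  \big[Order.min/mu3 q [set: 'I_q]]_(S : {set 'I_q} | rho * q%:R <= (#|S|)%:R)
     mu3 q S.

(* r(rho) = liminf_{q -> oo, q prime} r_q(rho)
          = sup_N inf { r_q(rho) : q prime, q >= N } *)
Definition rlim {R : realType} (rho : R) : R :=
  sup (range (fun N : nat => inf [set rq q rho | q in [set q : nat | prime q /\ (N <= q)%N]])).

Definition no3AP (q : nat) (S : {set 'I_q}) : Prop :=
  forall a b c : 'I_q, a \in S -> b \in S -> c \in S -> ap3 a b c -> a = b.

(* Main.v *)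
Require Import Defs.
From HB Require Import structures.
From mathcomp Require Import all_boot all_order all_algebra.
From mathcomp Require Import all_classical all_reals all_analysis.
From mathcomp Require Import zify ring lra.
Import numFieldNormedType.Exports.
Import Order.TTheory GRing.Theory Num.Theory.
Local Open Scope nat_scope.

Lemma key_nat (L a b c : nat) : (0 < L)%N -> (a %% (2*L) < L)%N -> (b %% (2*L) < L)%N ->
  (c %% (2*L) < L)%N -> (a + b = 2 * c)%N ->
  (a %/ (2*L) + b %/ (2*L) = 2 * (c %/ (2*L)))%N.
Proof.
move=> L0 ha hb hc e.
have ea := divn_eq a (2*L); have eb := divn_eq b (2*L); have ec := divn_eq c (2*L).
move: ha hb hc ea eb ec.
set s := a %% (2*L); set t := b %% (2*L); set u := c %% (2*L).
set A := a %/ (2*L); set B := b %/ (2*L); set C := c %/ (2*L).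
move=> ha hb hc ea eb ec.
case: (ltngtP (A + B) (2 * C)) => // h.
- have : ((A + B + 1) * (2 * L) <= 2 * C * (2 * L))%N by rewrite leq_mul2r; apply/orP; right; rewrite addn1.
  nia.
- have : ((2 * C + 1) * (2 * L) <= (A + B) * (2 * L))%N by rewrite leq_mul2r; apply/orP; right; rewrite addn1.
  nia.
Qed.

Lemma divmod_small (d x r : nat) : r < d -> (x * d + r) %/ d = x /\ (x * d + r) %% d = r.
Proof.
move=> h; have d0 : 0 < d by lia.
by rewrite divnMDl // divn_small // addn0 modnMDl modn_small.
Qed.

Lemma count_bound (M L q : nat) (S : {set 'I_M.+1}) (hS : no3AP S)
  (hq : 4 * M.+1 * L.+1 <= q.+1) :
  let T := [set x : 'I_q.+1 | [exists a : 'I_M.+1, (a \in S) && (x %/ (2*L.+1) == a)]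
                               && (x %% (2*L.+1) < L.+1)] in
  (#|S| * L.+1 <= #|T|) /\
  (#|[set t : 'I_q.+1 * 'I_q.+1 * 'I_q.+1 |
        [&& t.1.1 \in T, t.1.2 \in T, t.2 \in T & ap3 t.1.1 t.1.2 t.2]]|
     <= M.+1 * L.+1 * L.+1).
Proof.
move=> T.
have memT (x : 'I_q.+1) : x \in T -> x %/ (2 * L.+1) < M.+1 /\ x %% (2*L.+1) < L.+1 /\
    exists2 a : 'I_M.+1, a \in S & x %/ (2 * L.+1) = a.
  rewrite inE => /andP[/existsP[a /andP[aS /eqP ea]] hm].
  by split; [rewrite ea | split => //; exists a].
have lt_half (x : 'I_q.+1) : x \in T -> 2 * x < q.+1.
  move=> /memT [h1 [h2 _]].
  have := divn_eq x (2*L.+1); nia.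
split.
- pose g (p : 'I_M.+1 * 'I_L.+1) : 'I_q.+1 := inord (p.1 * (2*L.+1) + p.2).
  have gv p : (g p : nat) = p.1 * (2*L.+1) + p.2.
    rewrite inordK //; case: p => [[a ha] [b hb]] /=; nia.
  have ginj : injective g.
    move=> [a b] [a' b'] /(congr1 (@nat_of_ord _)); rewrite !gv /= => e.
    have [e1 e2] := divmod_small (2 * L.+1) a _ (ltn_trans (ltn_ord b) (ltac:(lia) : L.+1 < 2 * L.+1)).
    have [e1' e2'] := divmod_small (2 * L.+1) a' _ (ltn_trans (ltn_ord b') (ltac:(lia) : L.+1 < 2 * L.+1)).
    have ha : a = a' :> nat by rewrite -e1 -e1' e.
    have hb : b = b' :> nat by rewrite -e2 -e2' e.
    by congr pair; apply: val_inj.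
  have <- : #|g @: finset.setX S [set: 'I_L.+1]| = #|S| * L.+1.
    by rewrite card_imset // cardsX cardsT card_ord.
  apply: subset_leq_card; apply/fintype.subsetP => x /imsetP[[a b] /finset.setXP[aS _] ->].
  have [e1 e2] := divmod_small (2 * L.+1) a _ (ltn_trans (ltn_ord b) (ltac:(lia) : L.+1 < 2 * L.+1)).
  rewrite inE gv /= e1 e2 ltn_ord andbT; apply/existsP; exists a; by rewrite aS eqxx.
- set A := [set t | _].
  have core (a b c : 'I_q.+1) : a \in T -> b \in T -> c \in T -> ap3 a b c ->
      (a + b = 2 * c) /\ a %/ (2 * L.+1) = b %/ (2 * L.+1).
    move=> aT bT cT; rewrite /ap3 => /eqP e.
    have ha := lt_half _ aT; have hb := lt_half _ bT; have hc := lt_half _ cT.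
    rewrite !modn_small in e; try lia.
    split => //.
    have [_ [ma [al aS ea]]] := memT _ aT.
    have [_ [mb [bl bS eb]]] := memT _ bT.
    have [_ [mc [cl cS ec]]] := memT _ cT.
    have k := @key_nat L.+1 _ _ _ (ltn0Sn L) ma mb mc e.
    rewrite ea eb; congr nat_of_ord; apply: (hS _ _ cl) => //.
    by rewrite /ap3 -ea -eb -ec k.
  pose f (t : 'I_q.+1 * 'I_q.+1 * 'I_q.+1) : 'I_M.+1 * 'I_L.+1 * 'I_L.+1 :=
    (inord (t.1.1 %/ (2*L.+1)), inord (t.1.1 %% (2*L.+1)), inord (t.1.2 %% (2*L.+1))).
  apply: (@leq_trans #|f @: A|).
    rewrite card_in_imset // => [[[a b] c]] [[a' b'] c'].
    move=> hA hA'; move: hA; rewrite inE /= => /and4P[aT bT cT ap].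
    move: hA'; rewrite inE /= => /and4P[aT' bT' cT' ap'].
    have [m1 [m2 _]] := memT _ aT; have [m1' [m2' _]] := memT _ aT'.
    have [_ [m3 _]] := memT _ bT; have [_ [m3' _]] := memT _ bT'.
    have [e1 e2] := core _ _ _ aT bT cT ap.
    have [e1' e2'] := core _ _ _ aT' bT' cT' ap'.
    rewrite /f => -[e1o e2o e3o].
    have h1 : a %/ (2*L.+1) = a' %/ (2*L.+1).
      by move/(congr1 (@nat_of_ord _)): e1o; rewrite !inordK.
    have h2 : a %% (2*L.+1) = a' %% (2*L.+1).
      by move/(congr1 (@nat_of_ord _)): e2o; rewrite !inordK.
    have h3 : b %% (2*L.+1) = b' %% (2*L.+1).
      by move/(congr1 (@nat_of_ord _)): e3o; rewrite !inordK.
    have ea : a = a'.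
      by apply: val_inj; rewrite /= (divn_eq a (2*L.+1)) (divn_eq a' (2*L.+1)) h1 h2.
    have eb : b = b'.
      by apply: val_inj; rewrite /= (divn_eq b (2*L.+1)) (divn_eq b' (2*L.+1)) -e2 -e2' h1 h3.
    have ec : c = c'.
      apply: val_inj; move: e1 e1'; rewrite ea eb /= => -> /eqP.
      by rewrite eqn_mul2l /= => /eqP.
    by rewrite ea eb ec.
  apply: leq_trans (max_card _) _.
  by rewrite !card_prod !card_ord.
Qed.
Local Open Scope classical_set_scope.
Local Open Scope ring_scope.

Lemma rq_small (R : realType) (M : nat) (S : {set 'I_M.+1}) (hS : no3AP S) (rho : R)
  (hr0 : 0 <= rho) (hrho : rho * (8 * M.+1)%:R <= #|S|%:R) (q : nat)
  (hq : (8 * M.+1 <= q)%N) : rq q rho <= 1 / M.+1%:R.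
Proof.
case: q hq => [|q] hq; first by move: hq; rewrite leqn0 muln_eq0.
have [L [hL1 hL2]] : exists L, (4 * M.+1 * L.+1 <= q.+1 /\ q.+1 <= 8 * M.+1 * L.+1)%N.
  have := divn_eq q.+1 (4*M.+1); have := ltn_pmod q.+1 (ltac:(lia) : (0 < 4 * M.+1)%N).
  case E: (q.+1 %/ (4 * M.+1))%N => [|d] h1 h2.
    lia.
  exists d; nia.
have [hT hA] := @count_bound M L q S hS hL1.
rewrite /rq.
apply: le_trans; first apply: (@bigmin_le_cond _ _ _ _ ([set x : 'I_q.+1 | [exists a : 'I_M.+1, (a \in S) && (x %/ (2*L.+1) == a)%N]
                               && (x %% (2*L.+1) < L.+1)%N]%SET)).
  apply: (@le_trans _ _ (rho * (8 * M.+1 * L.+1)%:R)).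
    by rewrite ler_wpM2l // ler_nat.
  apply: (@le_trans _ _ (#|S| * L.+1)%:R); last by rewrite ler_nat.
  rewrite [X in _ <= X]natrM (natrM _ (8 * M.+1)) mulrA; apply: ler_wpM2r => //.
rewrite /mu3.
move: hA; set cnt := #|_| => hA.
have hc : (cnt * M.+1 <= q.+1 ^ 2)%N.
  apply: (@leq_trans (M.+1 * L.+1 * L.+1 * M.+1)); first by rewrite leq_mul2r hA orbT.
  have : (4 * M.+1 * L.+1 * (4 * M.+1 * L.+1) <= q.+1 * q.+1)%N by apply: leq_mul.
  nia.
rewrite ler_pdivrMr ?ltr0n ?expn_gt0 // mul1r mulrC ler_pdivlMr ?ltr0n //.
rewrite -natrM ler_nat; apply: leq_trans hc; rewrite leq_mul2r; apply/orP; right.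
apply: subset_leq_card; apply/fintype.subsetP => t /set_mem ht; rewrite inE; exact: ht.
Qed.
Lemma rq_ge0 (R : realType) q (rho : R) : 0 <= rq q rho.
Proof.
rewrite /rq; apply: le_bigmin => [|S _]; rewrite /mu3 divr_ge0 //.
Qed.

Lemma inf_ge0 {R : realType} (rho : R) N :
  0 <= inf [set rq q rho | q in [set q : nat | prime q /\ (N <= q)%N]].
Proof.
apply: lb_le_inf.
  have [p hp pp] := prime_above N.
  by exists (rq p rho); exists p => //; split => //; apply: ltnW.
by move=> _ [p _ <-]; apply: rq_ge0.
Qed.

Lemma rlim_ge0 (R : realType) (rho : R) : 0 <= rlim rho.
Proof.
rewrite /rlim; match goal with |- context [sup ?X] => set E := X end.
case: (pselect (has_sup E)) => hs; last by rewrite sup_out.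
apply: le_trans (inf_ge0 rho 0%N) _.
apply: (sup_upper_bound hs); by exists 0%N.
Qed.

Lemma rlim_le (R : realType) (rho b : R) (Q0 : nat) :
  (forall q, (Q0 <= q)%N -> prime q -> rq q rho <= b) -> rlim rho <= b.
Proof.
move=> h; rewrite /rlim; apply: ge_sup; first by exists (inf [set rq q rho | q in [set q : nat | prime q /\ (0 <= q)%N]]); exists 0%N.
move=> _ [N _ <-].
have [p hp pp] := prime_above (maxn N Q0).
apply: le_trans (h p _ pp); last by apply: leq_trans (leq_maxr N Q0) (ltnW hp).
apply: ge_inf; last by exists p => //; split => //; apply: leq_trans (leq_maxl N Q0) (ltnW hp).
by exists 0; move=> _ [r _ <-]; apply: rq_ge0.
Qed.
Lemma arithA {R : realType} (b D t Qr v : R) : 0 < b -> 0 < D -> 0 <= t -> 0 <= Qr ->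
  4 * b + 1 + 8 * D * t + D * Qr < v ->
  [/\ 1 <= v, D * Qr <= v, 4 * b + 1 <= v & 8 * D * t + 1 <= v].
Proof.
move=> b0 D0 t0 Q0 h.
have p1 : 0 <= 8 * D * t by rewrite mulr_ge0 // mulr_ge0 // ltW.
have p2 : 0 <= D * Qr by rewrite mulr_ge0 // ltW.
split; lra.
Qed.

Lemma arithB {R : realType} (b D t K v : R) : 0 < b -> 0 < D -> K <= t ->
  4 * b + 1 <= v -> 8 * D * t + 1 <= v ->
  K * (2 * D) < 2 * v ^+ 2 - (v + b) ^+ 2.
Proof.
move=> b0 D0 hK h1 h2.
have v0 : 0 < v by lra.
have e1 : 4 * b * v <= v * v by rewrite ler_wpM2r //; lra.
have e2 : 4 * b * b <= v * b by rewrite ler_wpM2r //; lra.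
have e3 : v <= v * v by rewrite -{1}[v]mulr1 ler_wpM2l //; lra.
have e4 : K * D <= t * D by rewrite ler_wpM2r //; lra.
have e5 : 8 * (D * t) < v by lra.
rewrite !expr2.
have -> : 2 * (v * v) - (v + b) * (v + b) = v * v - 2 * (v * b) - b * b by ring.
rewrite [v * b]mulrC; lra.
Qed.

Lemma natQ (Q M : nat) : (2 * Q + 2 < M.+2)%N -> (Q <= M.+1)%N.
Proof. lia. Qed.

Theorem lemma3 (R : realType) (C : R) (hC : 0 < C)
  (hBehrend : exists Q : nat, forall q : nat, (Q <= q)%N ->
      exists S : {set 'I_q},
        q%:R / expR (C * Num.sqrt (ln (q%:R : R))) < (#|S|)%:R /\ no3AP S)
  (x : nat -> R) (hx : forall k, 0 < x k <= 1) (hx0 : x @ \oo --> 0) :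
  forall N : nat, exists k : nat, (N <= k)%N /\
    rlim (x k.+1) / rlim (x k)
      < expR (- (1 / (2 * C ^+ 2)) * (ln (x k.+1) ^+ 2 - ln (x k) ^+ 2)).
Proof.
move=> N.
have [Q hQ] := hBehrend.
apply: contrapT => hno.
have H k : (N <= k)%N -> expR (- (1 / (2 * C ^+ 2)) * (ln (x k.+1) ^+ 2 - ln (x k) ^+ 2))
     <= rlim (x k.+1) / rlim (x k).
  move=> hk; rewrite leNgt; apply/negP => hlt; apply: hno; exists k; split => //.
set a := 1 / (2 * C ^+ 2) in H.
have a0 : 0 < a by rewrite /a divr_gt0 // mulr_gt0 // exprn_gt0.
have rpos k : (N <= k)%N -> 0 < rlim (x k).
  move=> hk; rewrite lt_neqAle rlim_ge0 andbT; apply/negP => /eqP h0.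
  have := H k hk; rewrite -h0 invr0 mulr0 => h.
  by have := lt_le_trans (expR_gt0 _) h; rewrite ltxx.
pose g k := rlim (x k) * expR (a * ln (x k) ^+ 2).
have gmono d : g N <= g (N + d)%N.
  elim: d => [|d IH]; first by rewrite addn0.
  apply: le_trans IH _; rewrite addnS /g.
  have := H (N + d)%N (leq_addr _ _); set k := (N + d)%N.
  rewrite ler_pdivlMr ?rpos ?leq_addr // => hE.
  have eE : expR (a * ln (x k) ^+ 2) = expR (- a * (ln (x k.+1) ^+ 2 - ln (x k) ^+ 2)) * expR (a * ln (x k.+1) ^+ 2).
    by rewrite -expRD; congr expR; ring.
  rewrite eE mulrA [rlim (x k) * _]mulrC.
  by apply: ler_wpM2r => //; apply/ltW/expR_gt0.
have c0pos : 0 < g N by rewrite /g mulr_gt0 ?rpos ?expR_gt0.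
have lowb k : (N <= k)%N -> g N * expR (- a * ln (x k) ^+ 2) <= rlim (x k).
  move=> hk; have := gmono (k - N)%N; rewrite subnKC // /g => h.
  apply: le_trans (ler_wpM2r (ltW (expR_gt0 (- a * ln (x k) ^+ 2))) h) _.
  by rewrite -mulrA -expRD mulNr addrN expR0 mulr1.
set c0 := g N.
set K := ln (2 : R) - ln c0.
set b := ln (8 : R).
have b0 : 0 < b by rewrite /b ln_gt0 // ltr1n.
set D := C ^+ 2.
have D0 : 0 < D by rewrite /D exprn_gt0.
set V := 4 * b + 1 + 8 * D * `|K| + D * (2 * Q + 1)%:R.
have hK : K <= `|K| by apply: ler_norm.
have hK0 : 0 <= `|K| by apply: normr_ge0.
have hQ0 : 0 <= (2 * Q + 1)%:R :> R by apply: ler0n.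
set eps := expR (- V) / 8.
have eps0 : 0 < eps by rewrite /eps divr_gt0 ?expR_gt0.
have [n _ hn] := (cvgrPdist_lt _ _).1 hx0 eps eps0.
pose k := maxn N n.
have hk : (N <= k)%N by apply: leq_maxl.
have hxk : x k < eps.
  have := hn k (leq_maxr N n); rewrite /= sub0r normrN ger0_norm //.
  by case/andP: (hx k) => /ltW.
set rho := x k in hxk.
have [rho0 rho1] := andP (hx k).
set v := - ln (8 * rho).
have hv : V < v.
  rewrite /v ltrNr -[X in _ < X]expRK ltr_ln ?posrE ?expR_gt0 ?mulr_gt0 //.
  by rewrite mulrC -ltr_pdivlMr.
have [v1 vQ vb vK] := @arithA R b D `|K| _ v b0 D0 hK0 hQ0 hv.
have lr : ln rho = - (v + b).
  by rewrite /v /b lnM ?posrE // opprD opprK [ln 8 + _]addrC addrK.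
set Y := expR (v ^+ 2 / D).
have hY : (2 * Q + 2)%:R <= Y.
  apply: le_trans (expR_ge1Dx _).
  have -> : (2 * Q + 2 = 1 + (2 * Q + 1))%N by rewrite add1n addnS.
  rewrite natrD lerD2l ler_pdivlMr //.
  apply: (@le_trans _ _ v); first by rewrite mulrC.
  by rewrite expr2 -{1}[v]mulr1 ler_wpM2l // (le_trans _ v1).
have Y0 : 0 < Y by apply: expR_gt0.
have [hM1 hM2] := andP (trunc_itv (ltW Y0)).
set M := Num.Def.trunc Y in hM1 hM2.
have hMQ : (2 * Q + 2 < M.+1)%N by rewrite -(ltr_nat R); apply: le_lt_trans hM2.
have hMY : Y <= 2 * M%:R.
  have hM1' : 1 <= M%:R :> R by rewrite ler1n; apply: (@leq_trans (2 * Q + 2)); [by rewrite addn2 | by rewrite -ltnS].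
  apply: ltW; apply: lt_le_trans hM2 _.
  by rewrite -addn1 natrD mulr2n mulrDl mul1r lerD2l.
clearbody M.
case: M hM1 hM2 hMQ hMY => [|M] hM1 hM2 hMQ hMY; first by move: hMQ; rewrite ltnS leqn0 addn2.
have [S [hS1 hS2]] := hQ M.+1 (@natQ Q M hMQ).
have Mpos : 0 < M.+1%:R :> R by rewrite ltr0n.
have hlnM : ln (M.+1%:R : R) <= v ^+ 2 / D.
  by rewrite -[X in _ <= X]expRK ler_ln ?posrE.
have v0 : 0 < v by apply: lt_le_trans v1; apply: ltr01.
have hsq : C * Num.sqrt (ln (M.+1%:R : R)) <= v.
  have : Num.sqrt (ln (M.+1%:R : R)) <= v / C.
    have -> : v / C = Num.sqrt ((v / C) ^+ 2).
      by rewrite sqrtr_sqr ger0_norm // divr_ge0 // ltW.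
    by rewrite ler_sqrt ?sqr_ge0 // expr_div_n.
  by rewrite ler_pdivlMr // mulrC.
have r8 : 0 < 8 * rho by rewrite mulr_gt0.
have hE : expR (C * Num.sqrt (ln (M.+1%:R : R))) <= (8 * rho)^-1.
  apply: (@le_trans _ _ (expR v)); first by rewrite ler_expR.
  by rewrite /v expRN lnK ?posrE.
have hrho : rho * (8 * M.+1)%:R <= #|S|%:R.
  apply: le_trans (ltW hS1).
  rewrite ler_pdivlMr ?expR_gt0 //.
  apply: le_trans (ler_wpM2l _ hE) _.
    by rewrite mulr_ge0 // ltW.
  have -> : rho * (8 * M.+1)%:R * (8 * rho)^-1 = M.+1%:R.
    rewrite natrM; field.
    by rewrite lt0r_neq0.
  by [].
have hr : rlim rho <= 1 / M.+1%:R.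
  apply: (@rlim_le R rho _ (8 * M.+1)%N) => q hq _.
  exact: (@rq_small R M S hS2 rho (ltW rho0) hrho q hq).
have h1M : 1 / M.+1%:R <= 2 * expR (- (v ^+ 2 / D)).
  rewrite expRN -/Y ler_pdivrMr // mulrAC ler_pdivlMr // mul1r.
  by [].
have lb := lowb k hk.
have strict : 2 * expR (- (v ^+ 2 / D)) < c0 * expR (- a * ln rho ^+ 2).
  have e2 : (2:R) = expR (ln 2) by rewrite lnK // posrE.
  have ec : c0 = expR (ln c0) by rewrite lnK // posrE.
  rewrite {1}e2 {1}ec -!expRD ltr_expR lr -subr_gt0.
  have -> : ln c0 + - a * (- (v + b)) ^+ 2 - (ln 2 + - (v ^+ 2 / D))
      = ((2 * v ^+ 2 - (v + b) ^+ 2) - K * (2 * D)) / (2 * D).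
    rewrite /a /K /D; field.
    by rewrite lt0r_neq0.
  have kB := @arithB R b D `|K| K v b0 D0 hK vb vK.
  by rewrite divr_gt0 ?subr_gt0 ?mulr_gt0.
by have := lt_le_trans strict (le_trans lb (le_trans hr h1M)); rewrite ltxx.
Qed.
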